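(* Consider a position in the Strong Ramsey game $\mathcal{R}(K_{\aleph_0}^{(3)}, \hat{K}_{2,4}^{(3)})$ in which $P_2$ has claimed all edges of a copy of $\hat{K}_{2,3}^{(3)}$ with main vertices $x,y$ and center $c$, and suppose that (i) $P_1$ does not have a threat; (ii) $P_1$ has not claimed all edges of a copy of $\hat{K}_{2,3}^{(3)}$ whose center is $c$ and one of whose main vertices is $x$; (iii) $P_1$ has not claimed all edges of a copy of $\hat{K}_{2,3}^{(3)}$ whose center is $x$ and one of whose main vertices is $c$. If it is $P_2$'s turn, then $P_2$ has a strategy from this position guaranteeing that $P_1$ never claims all edges of a copy of $\hat{K}_{2,4}^{(3)}$ (a drawing strategy).
   Context: Strong Ramsey game $\mathcal{R}(B,G)$: players $P_1$, $P_2$ alternately claim unclaimed edges of the $k$-uniform hypergraph $B$, $P_1$ first; the first to claim all edges of a copy of the finite $k$-uniform hypergraph $G$ wins; if nobody does so in finitely many moves the game is a draw. $K_{\aleph_0}^{(3)}$ is the complete $3$-uniform hypergraph on a countably infinite vertex set. $\hat{K}_{2,l}$ ($l\ge3$) is $K_{2,l}$ plus the edge joining its two vertices of degree $l$. For a graph $H$, $H^{(3)}$ is the $3$-uniform hypergraph obtained by adding one fixed new vertex $c$ (the center) to every edge of $H$. Main vertices of $\hat{K}_{2,l}^{(3)}$: the two vertices of degree $l+1$ in $\hat K_{2,l}$ (degree at least 3); a copy of $\hat{K}_{2,3}^{(3)}$ ''with main vertices $x,y$ and center $c$'' is one whose center is $c$ and whose main vertices are $x,y$. $P_1$ has a threat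 if she has claimed all edges of a copy of $\hat{K}_{2,4}^{(3)}$ minus one edge $e$, where the edge of the board corresponding to $e$ is claimed by neither player. *)

(* Defs.v *)
From mathcomp Require Import all_boot finmap.
Set Implicit Arguments. Unset Strict Implicit. Unset Printing Implicit Defensive.
Local Open Scope fset_scope.

(* Board: complete 3-uniform hypergraph on vertex set nat; an edge is a
   3-element finite set of naturals. *)
Definition edge3 (e : {fset nat}) : Prop := #|` e| = 3.

(* The graph \hat K_{2,l} on 'I_(l+2): vertices 0 and 1 are the two vertices
   of degree l+1 (the "main vertices"); edges {0,1} and {0,j},{1,j} for j>=2. *)
Definition khat (l : nat) : rel 'I_(l.+2) :=
  fun u v => (u != v) && ((val u < 2) || (val v < 2)).

Arguments khat l : clear implicits.

Definition main0 (l : nat) : 'I_(l.+2) := ord0.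
Definition main1 (l : nat) : 'I_(l.+2) := lift ord0 ord0.
Arguments main0 l : clear implicits.
Arguments main1 l : clear implicits.

(* f (with center c) is a copy of H^(3) all of whose edges lie in S:
   c together with the injective image of V are distinct vertices, and every
   hyperedge {c, f u, f v} (uv an edge of H) belongs to S. *)
Definition cone_copy (V : finType) (H : rel V) (S : {fset nat} -> Prop)
  (c : nat) (f : V -> nat) : Prop :=
  injective f /\ (forall v, f v <> c) /\
  (forall u v, H u v -> S [fset c; f u; f v]).

Definition threat (A B : {fset {fset nat}}) : Prop :=
  exists (c : nat) (f : 'I_(4.+2) -> nat) (e : {fset nat}),
    injective f /\ (forall v, f v <> c) /\
    (exists u v, khat 4 u v /\ e = [fset c; f u; f v]) /\
    e \notin A /\ e \notin B /\
    (forall u v, khat 4 u v -> [fset c; f u; f v] <> e ->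
                 [fset c; f u; f v] \in A).

Definition has_K24 (S : {fset nat} -> Prop) : Prop :=
  exists c (f : 'I_(4.+2) -> nat), cone_copy (khat 4) S c f.

(* P2 uses the strategy
   [str], which maps the list of P1's moves made so far (after the position)
   to P2's next move; P1 plays the sequence [p].  Order: b_0, p_0, b_1, p_1,...
   where b_i = str [p_0;...;p_(i-1)]. *)
Definition p2move (str : seq {fset nat} -> {fset nat}) (p : nat -> {fset nat})
  (i : nat) : {fset nat} := str (mkseq p i).

Definition ownA (A : {fset {fset nat}}) (p : nat -> {fset nat}) (k : nat)
  (e : {fset nat}) : Prop := e \in A \/ exists2 i, i < k & p i = e.

Definition ownB (B : {fset {fset nat}}) str p (k : nat) (e : {fset nat}) : Prop :=
  e \in B \/ exists2 i, i < k & p2move str p i = e.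

Definition legal2 A B str p (i : nat) : Prop :=
  edge3 (p2move str p i) /\ ~ ownA A p i (p2move str p i) /\
  ~ ownB B str p i (p2move str p i).

(* P1's i-th move is legal (P1 has made i moves, P2 has made i+1 moves). *)
Definition legal1 A B str p (i : nat) : Prop :=
  edge3 (p i) /\ ~ ownA A p i (p i) /\ ~ ownB B str p i.+1 (p i).

(* [str] is a drawing strategy for P2 from (A,B): against every legal
   sequence of P1's moves, while the game is still running (nobody has yet
   claimed a copy of \hat K_{2,4}^{(3)}), P2's move is legal, and P1's
   answer never completes a copy of \hat K_{2,4}^{(3)} (unless P2 has
   already won by her own move, which ends the game). *)
Definition drawing_strategy (A B : {fset {fset nat}})
  (str : seq {fset nat} -> {fset nat}) : Prop :=
  forall (p : nat -> {fset nat}) (k : nat),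
    (forall i, i < k -> legal1 A B str p i) ->
    ~ has_K24 (ownA A p k) -> ~ has_K24 (ownB B str p k) ->
    legal2 A B str p k /\
    (~ has_K24 (ownB B str p k.+1) -> legal1 A B str p k ->
     ~ has_K24 (ownA A p k.+1)).

(* Main.v *)
Require Import Defs.
From mathcomp Require Import all_boot finmap.
From Stdlib Require Import Classical.
From mathcomp Require Import zify.
From Stdlib Require Import Lia.
Set Implicit Arguments. Unset Strict Implicit. Unset Printing Implicit Defensive.
Local Open Scope fset_scope.

Lemma khat_neq l (u v : 'I_(l.+2)) : khat l u v -> u != v.
Proof. by case/andP. Qed.

Lemma nbrs l (u : 'I_(l.+1).+2) : exists a b, a != b /\ khat l.+1 u a /\ khat l.+1 u b.
Proof.
have h0 : nat_of_ord (inord 0 : 'I_(l.+3)) = 0 by rewrite inordK.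
have h1 : nat_of_ord (inord 1 : 'I_(l.+3)) = 1 by rewrite inordK.
have h2 : nat_of_ord (inord 2 : 'I_(l.+3)) = 2 by rewrite inordK.
have ne : forall (a b : 'I_(l.+3)), nat_of_ord a != nat_of_ord b -> a != b.
  by move=> a b H; apply/eqP => E; rewrite E eqxx in H.
have k : forall (a b : 'I_(l.+3)), nat_of_ord a != nat_of_ord b -> (nat_of_ord a < 2) || (nat_of_ord b < 2) -> khat l.+1 a b.
  by move=> a b H1 H2; rewrite /khat H2 andbT; apply: ne.
case: (ltnP (nat_of_ord u) 2) => hu.
- case: (eqVneq (nat_of_ord u) 0) => hu0.
  + exists (inord 1), (inord 2).
    split; [|split]; [apply: ne|apply: k|apply: k]; rewrite ?inordK ?hu0 ?hu //.
  + exists (inord 0), (inord 2).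
    split; [|split]; [apply: ne|apply: k|apply: k]; rewrite ?inordK ?hu //;
    by move: hu hu0; case: (nat_of_ord u) => [|[|]].
- exists (inord 0), (inord 1).
  split; [|split]; [apply: ne|apply: k|apply: k]; rewrite ?inordK ?orbT //;
  by move: hu; case: (nat_of_ord u) => [|[|]].
Qed.

Lemma nbrs3 (u : 'I_6) : nat_of_ord u < 2 -> exists a b d,
  [/\ a != b, a != d, b != d & [/\ khat 4 u a, khat 4 u b & khat 4 u d]].
Proof.
move=> hu.
have ne : forall (a b : 'I_6), nat_of_ord a != nat_of_ord b -> a != b.
  by move=> a b H; apply/eqP => E; rewrite E eqxx in H.
have k : forall (a b : 'I_6), nat_of_ord a != nat_of_ord b -> (nat_of_ord a < 2) -> khat 4 a b.
  by move=> a b H1 H2; rewrite /khat H2 andbT; apply: ne.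
case: (eqVneq (nat_of_ord u) 0) => hu0.
- exists (inord 1), (inord 2), (inord 3).
  split; [apply: ne|apply: ne|apply: ne|split; apply: k]; rewrite ?inordK ?hu0 //.
- exists (inord 0), (inord 2), (inord 3).
  split; [apply: ne|apply: ne|apply: ne|split; apply: k]; rewrite ?inordK //;
  by move: hu hu0; case: (nat_of_ord u) => [|[|]].
Qed.

Lemma in3 (c a b z : nat) : z \in [fset c; a; b] = [|| z == c, z == a | z == b].
Proof. by rewrite !inE orbA. Qed.

Lemma pigeon (T : Type) (E1 E2 E3 P Q : T) :
  E1 <> E2 -> E1 <> E3 -> E2 <> E3 ->
  (E1 = P \/ E1 = Q) -> (E2 = P \/ E2 = Q) -> (E3 = P \/ E3 = Q) -> False.
Proof. by move=> h12 h13 h23 [e1|e1] [e2|e2] [e3|e3]; subst; auto. Qed.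

Lemma edge_ne (c a b d : nat) : b != c -> b != a -> b != d ->
  [fset c; a; b] <> [fset c; a; d].
Proof.
move=> h1 h2 h3 E.
have : b \in [fset c; a; b] by rewrite in3 eqxx !orbT.
by rewrite E in3 (negbTE h1) (negbTE h2) (negbTE h3).
Qed.

Lemma noK_new l (SA : {fset nat} -> Prop) c' (g : 'I_(l.+1).+2 -> nat) X w :
  (forall e, SA e -> w \notin e) -> w \in X -> w != c' ->
  cone_copy (khat l.+1) (fun e => SA e \/ e = X) c' g ->
  cone_copy (khat l.+1) SA c' g.
Proof.
move=> fr wX wc [inj [ne H]]; split => //; split => // u v huv.
case: (H u v huv) => // hX; exfalso.
have key : forall t, w = g t -> False.
  move=> t wt; have [a [b [ab [ta tb]]]] := nbrs t.
  have E : forall z, khat l.+1 t z -> [fset c'; g t; g z] = X.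
    move=> z tz; case: (H t z tz) => // /fr; by rewrite in3 -wt eqxx orbT.
  apply: (@edge_ne c' (g t) (g a) (g b)).
  - by apply/eqP; apply: ne.
  - by rewrite (inj_eq inj) eq_sym; apply: khat_neq.
  - by rewrite (inj_eq inj).
  - by rewrite E // E.
have : w \in [fset c'; g u; g v] by rewrite hX.
rewrite in3 (negbTE wc) /= => /orP [/eqP|/eqP]; exact: key.
Qed.

Definition NT (SA SB : {fset nat} -> Prop) := forall c' (f : 'I_6 -> nat) (e0 : {fset nat}),
  injective f -> (forall v, f v <> c') ->
  (forall u v, khat 4 u v -> SA [fset c'; f u; f v] \/ [fset c'; f u; f v] = e0) -> SB e0.

Lemma mem_ne (E1 E2 : {fset nat}) b : b \in E1 -> b \notin E2 -> E1 <> E2.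
Proof. by move=> h1 h2 E; subst; rewrite h1 in h2. Qed.

Lemma fs3C (c a b : nat) : [fset c; a; b] = [fset c; b; a].
Proof. by apply/fsetP => z; rewrite !in3; congr (_ || _); exact: orbC. Qed.

Lemma khat_sym l (u v : 'I_(l.+2)) : khat l u v -> khat l v u.
Proof. by rewrite /khat eq_sym orbC. Qed.

Lemma kh4 (a b : 'I_6) : nat_of_ord a != nat_of_ord b ->
  (nat_of_ord a < 2) || (nat_of_ord b < 2) -> khat 4 a b.
Proof.
move=> H1 H2; rewrite /khat H2 andbT; apply/eqP => E; by rewrite E eqxx in H1.
Qed.

Lemma ord_ne n (a b : 'I_n) : nat_of_ord a != nat_of_ord b -> a != b.
Proof. by move=> H; apply/eqP => E; rewrite E eqxx in H. Qed.

Lemma klift (t : 'I_6) (ht : 2 <= t) (i j : 'I_5) :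
  khat 3 i j -> khat 4 (lift t i) (lift t j).
Proof.
have hb : forall i : 'I_5, i < 2 -> bump t i = i.
  by move=> k hk; rewrite /bump leqNgt (leq_trans hk ht).
case/andP => hij hm; apply/andP; split.
  by rewrite (inj_eq (@lift_inj _ t)).
rewrite /=; case/orP: hm => hm; by rewrite (hb _ hm) hm ?orbT.
Qed.


Lemma NT_step (SA SB : {fset nat} -> Prop) (c x w : nat) :
  NT SA SB -> (forall e, SA e -> w \notin e) -> w != c -> w != x ->
  ~ (exists f : 'I_5 -> nat, cone_copy (khat 3) SA c f /\ (f (main0 3) = x \/ f (main1 3) = x)) ->
  ~ (exists f : 'I_5 -> nat, cone_copy (khat 3) SA x f /\ (f (main0 3) = c \/ f (main1 3) = c)) ->
  NT (fun e => SA e \/ e = [fset c; x; w]) SB.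
Proof.
move=> nt fr wc wx n2 n3 c' f e0 inj ne H.
set X := [fset c; x; w].
have wX : w \in X by rewrite in3 eqxx !orbT.
case: (classic (exists u v, khat 4 u v /\ [fset c'; f u; f v] = X)) =>
  [[u0 [v0 [k0 E0]]]|no]; last first.
  apply: nt inj ne _ => u v huv; case: (H u v huv) => [[]|]; auto.
  by move=> E; exfalso; apply: no; exists u, v.
have inw : forall u v, khat 4 u v -> w \in [fset c'; f u; f v] ->
    [fset c'; f u; f v] = X \/ [fset c'; f u; f v] = e0.
  move=> u v huv hw; case: (H u v huv) => [[/fr|]|]; auto; by rewrite hw.
have fne : forall a b, a != b -> f a != f b by move=> a b; rewrite (inj_eq inj).
have nec : forall a, f a != c' by move=> a; apply/eqP; apply: ne.
have wE : w \in [fset c'; f u0; f v0] by rewrite E0.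
case: (eqVneq w c') => wc'.
-
  pose o0 : 'I_6 := inord 0. pose o1 : 'I_6 := inord 1. pose o2 : 'I_6 := inord 2.
  have n01 : o0 != o1 by apply: ord_ne; rewrite !inordK.
  have n02 : o0 != o2 by apply: ord_ne; rewrite !inordK.
  have n12 : o1 != o2 by apply: ord_ne; rewrite !inordK.
  have k01 : khat 4 o0 o1 by apply: kh4; rewrite !inordK.
  have k02 : khat 4 o0 o2 by apply: kh4; rewrite !inordK.
  have k12 : khat 4 o1 o2 by apply: kh4; rewrite !inordK.
  have hw : forall a b, w \in [fset c'; f a; f b] by move=> a b; rewrite in3 wc' eqxx.
  exfalso; apply: (pigeon _ _ _ (inw _ _ k01 (hw _ _)) (inw _ _ k02 (hw _ _)) (inw _ _ k12 (hw _ _))).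
  + apply: (@mem_ne _ _ (f o1)); first by rewrite in3 eqxx !orbT.
    by rewrite in3 negb_or negb_or nec (fne _ _ n12) eq_sym (fne _ _ n01).
  + apply: (@mem_ne _ _ (f o0)); first by rewrite in3 eqxx !orbT.
    by rewrite in3 negb_or negb_or nec (fne _ _ n01) (fne _ _ n02).
  + apply: (@mem_ne _ _ (f o0)); first by rewrite in3 eqxx !orbT.
    by rewrite in3 negb_or negb_or nec (fne _ _ n01) (fne _ _ n02).
have [t [m [wt [ktm Etm]]]] : exists t m, w = f t /\ khat 4 t m /\ [fset c'; f t; f m] = X.
  move: wE; rewrite in3 (negbTE wc') /= => /orP [/eqP h|/eqP h].
    by exists u0, v0.
  by exists v0, u0; split => //; split; [apply: khat_sym|rewrite fs3C].
have hw : forall a, w \in [fset c'; f t; f a] by move=> a; rewrite in3 wt eqxx orbT.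
case: (ltnP t 2) => ht.
- have [a [b [d [nab nad nbd [ka kb kd]]]]] := nbrs3 ht.
  have nta := khat_neq ka. have ntb := khat_neq kb. have ntd := khat_neq kd.
  exfalso; apply: (pigeon _ _ _ (inw _ _ ka (hw _)) (inw _ _ kb (hw _)) (inw _ _ kd (hw _))).
  + apply: (@mem_ne _ _ (f a)); first by rewrite in3 eqxx !orbT.
    by rewrite in3 negb_or negb_or nec eq_sym (fne _ _ nta) (fne _ _ nab).
  + apply: (@mem_ne _ _ (f a)); first by rewrite in3 eqxx !orbT.
    by rewrite in3 negb_or negb_or nec eq_sym (fne _ _ nta) (fne _ _ nad).
  + apply: (@mem_ne _ _ (f b)); first by rewrite in3 eqxx !orbT.
    by rewrite in3 negb_or negb_or nec eq_sym (fne _ _ ntb) (fne _ _ nbd).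
have ntm := khat_neq ktm.
have hm : m < 2 by move: ktm; rewrite /khat ltnNge ht /= => /andP [].
pose o0 : 'I_6 := inord 0. pose o1 : 'I_6 := inord 1.
have n01 : o0 != o1 by apply: ord_ne; rewrite !inordK.
have kt0 : khat 4 t o0 by apply: kh4; rewrite inordK //=; case: (nat_of_ord t) ht => [|[|]].
have kt1 : khat 4 t o1 by apply: kh4; rewrite inordK //=; case: (nat_of_ord t) ht => [|[|]].
have we0 : w \in e0.
  have ne01 : [fset c'; f t; f o0] <> [fset c'; f t; f o1].
    apply: (@mem_ne _ _ (f o0)); first by rewrite in3 eqxx !orbT.
    by rewrite in3 negb_or negb_or nec eq_sym (fne _ _ (khat_neq kt0)) (fne _ _ n01).
  case: (inw _ _ kt0 (hw _)) => [E1|<-]; last exact: hw.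
  case: (inw _ _ kt1 (hw _)) => [E2|<-]; last exact: hw.
  by exfalso; apply: ne01; rewrite E1 E2.
pose g := fun i : 'I_5 => f (lift t i).
have gc : cone_copy (khat 3) SA c' g.
  split; first by move=> i j /inj /lift_inj.
  split; first by move=> i; apply: ne.
  move=> i j kij; have k4 := klift ht kij.
  have nw : w \notin [fset c'; g i; g j].
    rewrite in3 negb_or negb_or wc' wt /g !(inj_eq inj).
    apply/and3P; split => //; apply/eqP => E; [move: (neq_lift t i)|move: (neq_lift t j)]; by rewrite -{1}E eqxx.
  case: (H _ _ k4) => [[//|E]|E]; exfalso; move: nw; by rewrite /g E ?wX ?we0.
have gm : f m = g (main0 3) \/ f m = g (main1 3).
  rewrite /g; move: hm; case: m ntm ktm {Etm} => [[|[|//]]] pm ntm ktm _ /=.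
  - left; congr f; apply: val_inj; by rewrite /= /bump leqNgt (leq_trans _ ht).
  - right; congr f; apply: val_inj; by rewrite /= /bump leqNgt (leq_trans _ ht).
have cX : c' \in X by rewrite -Etm in3 eqxx.
have mX : f m \in X by rewrite -Etm in3 eqxx !orbT.
have fmc' : f m != c' by apply: nec.
have fmw : f m != w by rewrite wt eq_sym (fne _ _ ntm).
move: cX; rewrite in3 (eq_sym c' w) (negbTE wc') orbF => /orP [/eqP cc|/eqP cx].
- exfalso; apply: n2; exists g; split; first by rewrite -cc.
  move: mX; rewrite in3 -cc (negbTE fmc') (negbTE fmw) /= orbF => /eqP fx.
  by case: gm => <-; auto.
- exfalso; apply: n3; exists g; split; first by rewrite -cx.
  move: mX; rewrite in3 -cx (negbTE fmc') (negbTE fmw) /= orbF => /eqP fx.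
  by case: gm => <-; auto.
Qed.

Lemma NT_init (A B : {fset {fset nat}}) :
  ~ threat A B -> ~ has_K24 (fun e => e \in A) ->
  NT (fun e => e \in A) (fun e => e \in B).
Proof.
move=> nth nk c' f e0 inj ne H.
case: (boolP (e0 \in B)) => // nB; exfalso.
case: (classic (exists u v, khat 4 u v /\ [fset c'; f u; f v] = e0 /\ e0 \notin A))
  => [[u [v [k [E nA]]]]|no].
  apply: nth; exists c', f, e0; split => //; split => //; split; first by exists u, v.
  split => //; split => // u' v' k' ne'.
  by case: (H u' v' k').
apply: nk; exists c', f; split => //; split => // u v k.
case: (H u v k) => // E.
case: (boolP (e0 \in A)) => [|nA]; first by rewrite E.
by exfalso; apply: no; exists u, v.
Qed.

Lemma NT_monoB (SA SB SB' : {fset nat} -> Prop) :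
  NT SA SB -> (forall e, SB e -> SB' e) -> NT SA SB'.
Proof. move=> nt h c' f e0 inj ne H; apply: h; exact: nt inj ne H. Qed.

Lemma win (S : {fset nat} -> Prop) c x y w (f : 'I_5 -> nat) :
  cone_copy (khat 3) S c f ->
  ((f (main0 3) = x /\ f (main1 3) = y) \/ (f (main0 3) = y /\ f (main1 3) = x)) ->
  (forall v, f v != w) -> w != c -> S [fset c; x; w] -> S [fset c; y; w] -> has_K24 S.
Proof.
move=> [inj [ne H]] hxy fw wc Sx Sy.
pose g := fun i : 'I_6 => if nat_of_ord i < 5 then f (inord i) else w.
have i5 : forall i : 'I_6, ~~ (nat_of_ord i < 5) -> val i = 5.
  by move=> [i hi] /=; rewrite -leqNgt => h; apply/eqP; rewrite eqn_leq h -ltnS hi.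
have m01 : forall i : 'I_6, val i < 2 -> f (inord i) = x \/ f (inord i) = y.
  move=> [i hi] /= h2.
  have e0 : (inord 0 : 'I_5) = main0 3 by apply: val_inj; rewrite /= inordK.
  have e1 : (inord 1 : 'I_5) = main1 3 by apply: val_inj; rewrite /= inordK.
  move: h2; case: i hi => [|[|//]] hi _; rewrite ?e0 ?e1; case: hxy => [[h0 h1]|[h0 h1]]; rewrite ?h0 ?h1; auto.
exists c, g; split; [|split].
- move=> i j; rewrite /g.
  case: (boolP (nat_of_ord i < 5)) => hi; case: (boolP (nat_of_ord j < 5)) => hj.
  + move/inj => /(congr1 (@nat_of_ord _)); rewrite !inordK // => h; exact: val_inj.
  + by move=> E; move: (fw (inord i)); rewrite E eqxx.
  + by move=> E; move: (fw (inord j)); rewrite E eqxx.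
  + by move=> _; apply: val_inj; rewrite /= (i5 _ hi) (i5 _ hj).
- move=> v; rewrite /g; case: ifP => _; [exact: ne | exact/eqP].
- move=> u v; rewrite /g => k.
  have [nuv huv] := andP k.
  case: (boolP (nat_of_ord u < 5)) => hu; case: (boolP (nat_of_ord v < 5)) => hv.
  + apply: H; rewrite /khat /= !inordK //; apply/andP; split => //.
    apply/eqP => /(congr1 (@nat_of_ord _)); rewrite !inordK // => h.
    by rewrite (val_inj h) eqxx in nuv.
  + move: huv; rewrite (i5 _ hv) orbF => h2.
    by case: (m01 _ h2) => ->.
  + move: huv; rewrite (i5 _ hu) orbC orbF => h2.
    by rewrite fs3C; case: (m01 _ h2) => ->.
  + have E : u = v by apply: val_inj; rewrite (i5 _ hu) (i5 _ hv).
    by rewrite E eqxx in nuv.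
Qed.

Lemma card3 (a b c : nat) : a != b -> a != c -> b != c -> #|` [fset a; b; c]| = 3.
Proof.
move=> hab hac hbc; rewrite fsetUC cardfsU1 cardfs2 hab.
by rewrite !inE negb_or eq_sym hac eq_sym hbc.
Qed.

Lemma cone_mono (V : finType) (H : rel V) (S S' : {fset nat} -> Prop) (c : nat) (f : V -> nat) :
  (forall e, S e -> S' e) -> cone_copy H S c f -> cone_copy H S' c f.
Proof. by move=> h [i [n E]]; split => //; split => // u v /E /h. Qed.

Lemma NT_antiA (SA SA' SB : {fset nat} -> Prop) :
  NT SA SB -> (forall e, SA' e -> SA e) -> NT SA' SB.
Proof.
move=> nt h c' f e0 inj ne H; apply: nt inj ne _ => u v k.
by case: (H u v k); auto.
Qed.

Lemma le_sum_mem (T : eqType) (s : seq T) (F : T -> nat) a :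
  a \in s -> F a <= \sum_(i <- s) F i.
Proof.
elim: s => // b s IH; rewrite in_cons big_cons => /orP [/eqP ->|h].
  exact: leq_addr.
by apply: leq_trans (IH h) _; apply: leq_addl.
Qed.

Definition tot (s : seq {fset nat}) := \sum_(e <- s) \sum_(v <- e) v.

Lemma tot_mem (s : seq {fset nat}) e v : e \in s -> v \in e -> v <= tot s.
Proof.
move=> es ve; apply: leq_trans (le_sum_mem (fun e : {fset nat} => \sum_(v <- e) v) es).
exact: (le_sum_mem id ve).
Qed.

Lemma tot_mkseq (p : nat -> {fset nat}) j k : j <= k -> tot (mkseq p j) <= tot (mkseq p k).
Proof.
elim: k => [|k IH]; first by rewrite leqn0 => /eqP ->.
rewrite leq_eqVlt => /orP [/eqP ->//|]; rewrite ltnS => /IH h.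
apply: leq_trans h _; rewrite mkseqS /tot -cats1 big_cat /=; exact: leq_addr.
Qed.

Lemma find_first (a : pred nat) n j0 : j0 < n -> a j0 -> (forall j, j < j0 -> ~~ a j) ->
  find a (iota 0 n) = j0.
Proof.
move=> hn hj hb.
have hs : has a (iota 0 n) by apply/hasP; exists j0; rewrite // mem_iota.
case: (ltngtP (find a (iota 0 n)) j0) => // h.
- have := nth_find 0 hs; rewrite nth_iota ?add0n; last by apply: ltn_trans h hn.
  by move/negP: (hb _ h).
- have := before_find 0 h; by rewrite nth_iota // add0n hj.
Qed.

Definition Wv (A B : {fset {fset nat}}) (c x y : nat) (s : seq {fset nat}) :=
  (tot A + tot B + tot s + c + x + y + size s + 1)%N.

Definition strat (A B : {fset {fset nat}}) (c x y : nat) (s : seq {fset nat}) : {fset nat} :=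
  let j0 := find (fun j => nth fset0 s j != [fset c; x; Wv A B c x y (take j s)])
                 (iota 0 (size s)) in
  if j0 < size s then [fset c; x; Wv A B c x y (take j0 s)]
  else [fset c; y; Wv A B c x y s].

Lemma take_mkseq (p : nat -> {fset nat}) j i : j <= i -> take j (mkseq p i) = mkseq p j.
Proof. by move=> h; rewrite /mkseq -map_take take_iota (minn_idPl h). Qed.

Lemma p2_ok A B c x y p i :
  (forall j, j < i -> p j = [fset c; x; Wv A B c x y (mkseq p j)]) ->
  p2move (strat A B c x y) p i = [fset c; y; Wv A B c x y (mkseq p i)].
Proof.
move=> h; rewrite /p2move /strat size_mkseq hasNfind.
  by rewrite size_iota ltnn.
apply/hasPn => j; rewrite mem_iota add0n => /andP [_ hj].
rewrite nth_mkseq // take_mkseq ?(ltnW hj) // -(h j hj).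
by rewrite negbK.
Qed.

Lemma p2_fail A B c x y p i j0 : j0 < i ->
  (forall j, j < j0 -> p j = [fset c; x; Wv A B c x y (mkseq p j)]) ->
  p j0 != [fset c; x; Wv A B c x y (mkseq p j0)] ->
  p2move (strat A B c x y) p i = [fset c; x; Wv A B c x y (mkseq p j0)].
Proof.
move=> hi hb h0; rewrite /p2move /strat size_mkseq.
have hj0 : j0 <= i by apply: ltnW.
rewrite (@find_first _ _ j0) // ?hi ?(take_mkseq _ hj0) //.
  by rewrite nth_mkseq // (take_mkseq _ hj0).
move=> j hj; have hji : j < i by apply: ltn_trans hj hi.
rewrite nth_mkseq // (take_mkseq _ (ltnW hji)) -(hb j hj).
by rewrite negbK.
Qed.

Unset Implicit Arguments.
Set Strict Implicit.

Theorem lemma3p2 (A B : {fset {fset nat}}) (c x y : nat) :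
  (forall e, e \in A -> edge3 e) -> (forall e, e \in B -> edge3 e) ->
  [disjoint A & B] ->
  ~ has_K24 (fun e => e \in A) -> ~ has_K24 (fun e => e \in B) ->
  #|` A| = (#|` B|).+1 ->
  (exists f : 'I_(3.+2) -> nat,
     cone_copy (khat 3) (fun e => e \in B) c f /\
     ((f (main0 3) = x /\ f (main1 3) = y) \/
      (f (main0 3) = y /\ f (main1 3) = x))) ->
  ~ threat A B ->
  ~ (exists f : 'I_(3.+2) -> nat,
       cone_copy (khat 3) (fun e => e \in A) c f /\
       (f (main0 3) = x \/ f (main1 3) = x)) ->
  ~ (exists f : 'I_(3.+2) -> nat,
       cone_copy (khat 3) (fun e => e \in A) x f /\
       (f (main0 3) = c \/ f (main1 3) = c)) ->
  exists str : seq {fset nat} -> {fset nat}, drawing_strategy A B str.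
Proof.
move=> hA hB dAB nkA nkB cardAB [f3 [f3c hxy]] nth n2 n3.
have [inj3 [ne3 H3]] := f3c.
have m01 : main0 3 != main1 3 by [].
have [cx [cy xy]] : [/\ c != x, c != y & x != y].
  have a := ne3 (main0 3); have b := ne3 (main1 3).
  have d : f3 (main0 3) != f3 (main1 3) by rewrite (inj_eq inj3).
  case: hxy => [[ex ey]|[ex ey]]; rewrite -ex -ey;
   (split; [apply/eqP => E; by [apply: a|apply: b] | apply/eqP => E; by [apply: a|apply: b] |]);
   rewrite // eq_sym //.
pose W := Wv A B c x y.
pose str := strat A B c x y.
exists str => p k leg nkAk nkBk.
pose wk j := W (mkseq p j).
have Wc : forall s, c < W s by move=> s; rewrite /W /Wv; lia.
have Wx : forall s, x < W s by move=> s; rewrite /W /Wv; lia.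
have Wy : forall s, y < W s by move=> s; rewrite /W /Wv; lia.
have WA : forall s e v, e \in A -> v \in e -> v < W s.
  move=> s e v he hv; have := tot_mem he hv; rewrite /W /Wv; lia.
have WB : forall s e v, e \in B -> v \in e -> v < W s.
  move=> s e v he hv; have := tot_mem he hv; rewrite /W /Wv; lia.
have Wp : forall i j v, i < j -> v \in p i -> v < wk j.
  move=> i j v hij hv.
  have hm : p i \in mkseq p j by rewrite /mkseq; apply: map_f; rewrite mem_iota.
  have := tot_mem hm hv; rewrite /wk /W /Wv; lia.
have Wmono : forall i j, i < j -> wk i < wk j.
  move=> i j hij; have := tot_mkseq p (ltnW hij).
  rewrite /wk /W /Wv !size_mkseq; lia.
have ltne : forall a b : nat, a < b -> b != a by move=> a b h; rewrite gtn_eqF.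
have notin3 : forall a b d w : nat, w != a -> w != b -> w != d -> w \notin [fset a; b; d].
  by move=> a b d w h1 h2 h3; rewrite in3 negb_or negb_or h1 h2 h3.
have inw3 : forall a b w : nat, w \in [fset a; b; w] by move=> *; rewrite in3 eqxx !orbT.
have freshA : forall j e, ownA A p j e -> wk j \notin e.
  move=> j e [he|[i hi <-]]; apply/negP => hv.
    by have := WA (mkseq p j) e _ he hv; rewrite ltnn.
  by have := Wp _ _ _ hi hv; rewrite ltnn.
have f3w : forall j v, f3 v != wk j.
  move=> j v; have [a [b [_ [k1 _]]]] := nbrs (l:=2) v.
  have he := H3 v a k1.
  have hv : f3 v \in [fset c; f3 v; f3 a] by rewrite in3 eqxx orbT.
  by rewrite eq_sym ltne // (WB _ _ _ he hv).
have ownA_S : forall j e, ownA A p j.+1 e -> ownA A p j e \/ e = p j.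
  move=> j e [he|[i hi <-]]; first by left; left.
  move: hi; rewrite ltnS leq_eqVlt => /orP [/eqP ->|hi]; first by right.
  by left; right; exists i.
have ownB_mono : forall j e, ownB B str p j e -> ownB B str p j.+1 e.
  by move=> j e [he|[i hi E]]; [left|right; exists i => //; apply: ltnW].
have ownB_B : forall j e, e \in B -> ownB B str p j e by move=> j e he; left.
have ownB_move : forall j i, i < j -> ownB B str p j (p2move str p i).
  by move=> j i hi; right; exists i.
have wkc : forall j, wk j != c by move=> j; apply: ltne; apply: Wc.
have wkx : forall j, wk j != x by move=> j; apply: ltne; apply: Wx.
have wky : forall j, wk j != y by move=> j; apply: ltne; apply: Wy.
have winS : forall j0 m, (forall j, j < j0 -> p j = [fset c; x; wk j]) ->
    p j0 != [fset c; x; wk j0] -> j0.+1 < m -> has_K24 (ownB B str p m).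
  move=> j0 m hb h0 hm.
  have m0 : p2move str p j0 = [fset c; y; wk j0] by apply: p2_ok.
  have m1 : p2move str p j0.+1 = [fset c; x; wk j0] by apply: p2_fail.
  apply: (@win _ c x y (wk j0) f3 _ hxy _ (wkc j0)).
  - by apply: cone_mono f3c => e; apply: ownB_B.
  - by move=> v; apply: f3w.
  - by rewrite -m1; apply: ownB_move.
  - by rewrite -m0; apply: ownB_move; apply: ltn_trans hm.
case: (classic (forall j, j < k -> p j = [fset c; x; wk j])) => [allr|nallr].
- have inv : forall j, j <= k -> [/\ NT (ownA A p j) (ownB B str p j.+1),
      ~ (exists f : 'I_5 -> nat, cone_copy (khat 3) (ownA A p j) c f /\
           (f (main0 3) = x \/ f (main1 3) = x)) &
      ~ (exists f : 'I_5 -> nat, cone_copy (khat 3) (ownA A p j) x f /\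
           (f (main0 3) = c \/ f (main1 3) = c))].
    elim => [_|j IH hj].
      have sub : forall e, ownA A p 0 e -> e \in A by move=> e [//|[i]].
      split.
      + apply: NT_monoB (ownB_B 1); apply: NT_antiA sub; exact: NT_init.
      + move=> [g [gc hg]]; apply: n2; exists g; split => //; exact: cone_mono gc.
      + move=> [g [gc hg]]; apply: n3; exists g; split => //; exact: cone_mono gc.
    have [nt m2 m3] := IH (ltnW hj).
    have pj := allr j hj.
    have sub : forall e, ownA A p j.+1 e -> ownA A p j e \/ e = [fset c; x; wk j].
      by move=> e /ownA_S [h|->]; [left|right].
    split.
    + apply: NT_monoB (ownB_mono j.+1); apply: NT_antiA sub.
      exact: NT_step nt (freshA j) (wkc j) (wkx j) m2 m3.
    + move=> [g [gc hg]]; apply: m2; exists g; split => //.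
      apply: (@noK_new 2 _ c g [fset c; x; wk j] (wk j)) (freshA j) (inw3 _ _ _) (wkc j) _.
      exact: cone_mono gc.
    + move=> [g [gc hg]]; apply: m3; exists g; split => //.
      apply: (@noK_new 2 _ x g [fset c; x; wk j] (wk j)) (freshA j) (inw3 _ _ _) (wkx j) _.
      exact: cone_mono gc.
  have p2k : p2move str p k = [fset c; y; wk k] by apply: p2_ok.
  split.
  + rewrite /legal2 p2k; split; first by apply: card3; rewrite // eq_sym.
    split; first by move/freshA; rewrite inw3.
    case => [he|[i hi E]].
      by have := WB (mkseq p k) _ _ he (inw3 c y (wk k)); rewrite ltnn.
    have : wk k \in p2move str p i by rewrite E inw3.
    rewrite (@p2_ok _ _ _ _ _ _ i); last by move=> j hj; apply: allr; apply: ltn_trans hj hi.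
    rewrite in3 (negbTE (wkc k)) (negbTE (wky k)) /=.
    by rewrite (negbTE (ltne _ _ (Wmono _ _ hi))).
  + move=> _ [_ [nA nB]] [c' [f [inj [ne H]]]].
    have [nt _ _] := inv k (leqnn k).
    apply: nB; apply: (nt c' f (p k) inj ne) => u v kuv.
    by case: (ownA_S _ _ (H u v kuv)); auto.
have ex : exists j, (j < k) && (p j != [fset c; x; wk j]).
  apply: NNPP => ne; apply: nallr => j hj.
  case: (boolP (p j == [fset c; x; wk j])) => [/eqP //|h].
  by exfalso; apply: ne; exists j; rewrite hj h.
case: (ex_minnP ex) => j0 /andP [hj0 bad0] minj.
have before : forall j, j < j0 -> p j = [fset c; x; wk j].
  move=> j hj; case: (boolP (p j == [fset c; x; wk j])) => [/eqP //|h].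
  have := minj j; rewrite (ltn_trans hj hj0) h => /(_ isT).
  by rewrite leqNgt hj.
case: (ltnP j0.+1 k) => hk.
  by exfalso; apply: nkBk; apply: winS before bad0 hk.
have ek : k = j0.+1 by apply/eqP; rewrite eqn_leq hk hj0.
have mk : p2move str p k = [fset c; x; wk j0] by apply: p2_fail.
split; last first.
  by move=> nkB1; exfalso; apply: nkB1; apply: winS before bad0 _; rewrite ek.
rewrite /legal2 mk; split; first by apply: card3; rewrite // eq_sym.
split.
  case => [he|[i hi E]].
    by have := WA (mkseq p j0) _ _ he (inw3 c x (wk j0)); rewrite ltnn.
  move: hi; rewrite ek ltnS leq_eqVlt => /orP [/eqP ei|hi].
    by move: bad0; rewrite -{1}ei E eqxx.
  have : wk j0 \in p i by rewrite E inw3.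
  rewrite (before i hi).
  rewrite in3 (negbTE (wkc j0)) (negbTE (wkx j0)) /=.
  by rewrite (negbTE (ltne _ _ (Wmono _ _ hi))).
case => [he|[i hi E]].
  by have := WB (mkseq p j0) _ _ he (inw3 c x (wk j0)); rewrite ltnn.
have hij : i <= j0 by rewrite -ltnS -ek.
have : x \in p2move str p i by rewrite E in3 eqxx orbT.
rewrite (@p2_ok _ _ _ _ _ _ i); last by move=> j hj; apply: before; apply: leq_trans hj hij.
by rewrite in3 eq_sym (negbTE cx) (negbTE xy) /= eq_sym (negbTE (wkx i)).
Qed.
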